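(* Assume $\mathbf E\mathbf E^\top$ and $\mathbf F^{(q)}\mathbf F^{(q)\top}$ ($1\le q\le Q$) are irreducible. Let $\bar{\mathbf S}=\mathbf J\boldsymbol\Sigma\mathbf J^\top$ be an eigenvalue decomposition with $\mathbf J\in\mathbb R^{K\times K}$ orthogonal and eigenvalues in decreasing order, let $\mathbf U=\boldsymbol\Theta_\theta\mathbf J=[\mathbf u_1,\dots,\mathbf u_K]$, and for any orthogonal $\mathbf O\in\mathbb R^{(K-1)\times(K-1)}$ and $c\in\{-1,1\}$ let $\mathbf R\in\mathbb R^{n\times(K-1)}$ have $i$-th row $\mathbf R_{\bar i}=([\mathbf u_2,\dots,\mathbf u_K]\mathbf O)_{\bar i}/(c\,\mathbf u_1(i))$. Then for all $1\le i_1,i_2\le n$: $\|\mathbf R_{\bar{i_1}}-\mathbf R_{\bar{i_2}}\|\ge2$ if $l_{i_1}\ne l_{i_2}$, and $\|\mathbf R_{\bar{i_1}}-\mathbf R_{\bar{i_2}}\|=0$ if $l_{i_1}=l_{i_2}$.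
   Context: Fix integers $K\ge2$, $K'\ge1$, $Q\ge1$. Primary nodes $\{1,\dots,n\}$ have labels $l_i\in\{1,\dots,K\}$, bipartite nodes $\{1,\dots,m\}$ have labels $r_j\in\{1,\dots,K'\}$, all communities nonempty. Parameters: $\boldsymbol\theta\in(0,1]^n$, $\boldsymbol\delta\in(0,1]^m$, symmetric $\mathbf E\in[0,1]^{K\times K}$, $\mathbf F^{(q)}\in[0,1]^{K\times K'}$. Define $\boldsymbol\theta^{(k)}_i=\theta_i\mathbb I(l_i=k)$, $\boldsymbol\delta^{(k')}_j=\delta_j\mathbb I(r_j=k')$, $\boldsymbol\Theta_\theta\in\mathbb R^{n\times K}$ with $\boldsymbol\Theta_\theta(i,k)=\theta_i\mathbb I(l_i=k)/\|\boldsymbol\theta^{(k)}\|$, $\boldsymbol\Psi_\theta=\mathrm{diag}(\|\boldsymbol\theta^{(k)}\|/\|\boldsymbol\theta\|)$, $\boldsymbol\Psi_\delta=\mathrm{diag}(\|\boldsymbol\delta^{(k')}\|/\|\boldsymbol\delta\|)$, $\mathbf S^{(0)}=\boldsymbol\Psi_\theta\mathbf E\boldsymbol\Psi_\theta$, $\mathbf S^{(q)}=\boldsymbol\Psi_\theta\mathbf F^{(q)}\boldsymbol\Psi_\delta$, $\bar{\mathbf S}=(\|\boldsymbol\theta\|^2/\|\boldsymbol\delta\|^2)\mathbf S^{(0)}\mathbf S^{(0)\top}+\sum_q\mathbf S^{(q)}\mathbf S^{(q)\top}$. Then $\mathbf U=\boldsymbol\Theta_\theta\mathbf J$ gives the $K$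 leading eigenvectors of the population aggregated matrix $\boldsymbol\Omega_M=\|\boldsymbol\theta\|^2\|\boldsymbol\delta\|^2\boldsymbol\Theta_\theta\bar{\mathbf S}\boldsymbol\Theta_\theta^\top$, and $\mathbf R$ is its ratio matrix. $\mathbf X_{\bar i}$ denotes the $i$-th row of a matrix $\mathbf X$; $\|\cdot\|$ is the Euclidean norm. *)

(* Defs.v *)
From HB Require Import structures.
From mathcomp Require Import all_boot all_order all_algebra.
Set Implicit Arguments. Unset Strict Implicit. Unset Printing Implicit Defensive.
Import Order.TTheory GRing.Theory Num.Theory.
Local Open Scope ring_scope.

Section Defs.
Variable R : rcfType.

Definition vnorm (p : nat) (v : 'rV[R]_p) : R := Num.sqrt (\sum_j v 0 j ^+ 2).

Definition fnorm (n : nat) (x : 'I_n -> R) : R := Num.sqrt (\sum_i x i ^+ 2).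

Definition comm_norm (n K : nat) (lab : 'I_n -> 'I_K) (x : 'I_n -> R) (k : 'I_K) : R :=
  fnorm (fun i => x i * (lab i == k)%:R).

Definition ThetaM (n K : nat) (l : 'I_n -> 'I_K) (theta : 'I_n -> R) : 'M[R]_(n, K) :=
  \matrix_(i, k) (theta i * (l i == k)%:R / comm_norm l theta k).

Definition PsiM (n K : nat) (lab : 'I_n -> 'I_K) (x : 'I_n -> R) : 'M[R]_K :=
  diag_mx (\row_k (comm_norm lab x k / fnorm x)).

Definition Sbar (n m K K' Q : nat) (l : 'I_n -> 'I_K) (r : 'I_m -> 'I_K')
    (theta : 'I_n -> R) (delta : 'I_m -> R)
    (E : 'M[R]_K) (F : 'I_Q -> 'M[R]_(K, K')) : 'M[R]_K :=
  let S0 := PsiM l theta *m E *m PsiM l theta in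
  (fnorm theta ^+ 2 / fnorm delta ^+ 2) *: (S0 *m S0^T)
  + \sum_q ((PsiM l theta *m F q *m PsiM r delta) *m (PsiM l theta *m F q *m PsiM r delta)^T).

(* Irreducible square matrix (Perron-Frobenius sense): there is no
   permutation P with P^T A P block upper triangular [[B, C], [0, D]] with
   B, D nonempty square blocks; i.e. there is no nonempty proper index set S
   such that A(i, j) = 0 for all i outside S and j in S. *)
Definition irreducible_mx (K : nat) (A : 'M[R]_K) : Prop :=
  ~ exists S : {set 'I_K},
      [/\ S != set0, S != setT & forall i j, i \notin S -> j \in S -> A i j = 0].

End Defs.

(* Main.v *)
Require Import Defs.
From HB Require Import structures.
From mathcomp Require Import all_boot all_order all_algebra.
From mathcomp Require Import ring lra.
Import Order.TTheory GRing.Theory Num.Theory.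
Local Open Scope ring_scope.

Lemma qform (R : rcfType) K (J : 'M[R]_K) (s : 'rV[R]_K) (x : 'cV[R]_K) :
  (x^T *m (J *m diag_mx s *m J^T) *m x) 0 0 =
  \sum_a s 0 a * ((J^T *m x) a 0) ^+ 2.
Proof.
have -> : x^T *m (J *m diag_mx s *m J^T) *m x =
   (J^T *m x)^T *m diag_mx s *m (J^T *m x).
  by rewrite trmx_mul trmxK !mulmxA.
rewrite mul_mx_diag !mxE; apply: eq_bigr => a _; rewrite !mxE; ring.
Qed.

Lemma sqnorm (R : rcfType) K (x : 'cV[R]_K) :
  (x^T *m x) 0 0 = \sum_i (x i 0) ^+ 2.
Proof. rewrite mxE; apply: eq_bigr => i _; rewrite mxE expr2 //. Qed.

Lemma PF (R : rcfType) K (S J : 'M[R]_K.+1) (s : 'rV[R]_K.+1) :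
  J *m J^T = 1%:M -> (forall a, s 0 a <= s 0 0) ->
  S = J *m diag_mx s *m J^T -> (forall i j, 0 <= S i j) ->
  irreducible_mx S -> forall i, J i 0 != 0.
Proof.
move=> hJ hs hS hpos hirr i0.
have hJ' : J^T *m J = 1%:M by apply: mulmx1C.
set s0 := s 0 0.
pose w : 'cV[R]_K.+1 := \col_i `|J i 0|.
pose y := J^T *m w.
have hw1 : \sum_i (w i 0) ^+ 2 = 1.
  have := hJ'; move/matrixP/(_ 0 0); rewrite !mxE /= => e; rewrite -[RHS]e.
  by apply: eq_bigr => i _; rewrite !mxE real_normK ?num_real // expr2.
have hy1 : \sum_a (y a 0) ^+ 2 = 1.
  rewrite -hw1 -!sqnorm.
  by rewrite /y trmx_mul trmxK mulmxA -(mulmxA _ J) hJ mulmx1.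
have hv : \sum_a s 0 a * ((J^T *m col 0 J) a 0) ^+ 2 = s0.
  have e : forall a, (J^T *m col 0 J) a 0 = (a == 0)%:R.
    move=> a; have /matrixP/(_ a 0) := hJ'; rewrite [in RHS]mxE => <-; rewrite !mxE; apply: eq_bigr => j _; rewrite !mxE //.
  rewrite (bigD1 0) //=. idtac.
  rewrite e eqxx expr1n mulr1 big1 ?addr0 //.
  by move=> a ha; rewrite e (negbTE ha) expr0n mulr0.
have hge : s0 <= \sum_a s 0 a * (y a 0) ^+ 2.
  rewrite -hv -!qform -hS.
  rewrite !mxE; apply: ler_sum => i _; rewrite !mxE mulr_suml [X in _ <= X]mulr_suml.
  apply: ler_sum => j _; rewrite !mxE.
  have hp := hpos j i.
  rewrite mulrAC [X in _ <= X]mulrAC; apply: ler_wpM2r => //.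
  by rewrite -normrM ler_norm.
have heig : forall a, s 0 a * y a 0 = s0 * y a 0.
  have hsum : \sum_a (s0 - s 0 a) * (y a 0) ^+ 2 = 0.
    apply/eqP; rewrite eq_le; apply/andP; split; last first.
      by apply: sumr_ge0 => a _; apply: mulr_ge0; [rewrite subr_ge0 | apply: sqr_ge0].
    under eq_bigr do rewrite mulrBl.
    by rewrite sumrB -mulr_sumr hy1 mulr1 subr_le0.
  have hnn : forall a, true -> 0 <= (s0 - s 0 a) * y a 0 ^+ 2.
    by move=> a _; apply: mulr_ge0; [rewrite subr_ge0 | apply: sqr_ge0].
  move=> a; have := @psumr_eq0P _ _ _ _ hnn hsum a isT.
  move/eqP; rewrite mulf_eq0 sqrf_eq0 => /orP [h | /eqP ->]; last by rewrite !mulr0.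
  by move: h; rewrite subr_eq0 => /eqP ->.
have hdy : diag_mx s *m y = s0 *: y.
  apply/matrixP => a b; rewrite mul_diag_mx mxE [RHS]mxE ord1; exact: heig.
have hSw : S *m w = s0 *: w.
  by rewrite hS -!mulmxA hdy -scalemxAr mulmxA hJ mul1mx.
apply/negP => /eqP hz; apply: hirr.
exists [set j | w j 0 != 0]; split.
- apply/negP => /eqP h0.
  have : \sum_i w i 0 ^+ 2 = 0.
    apply: big1 => i _.
    have : i \notin [set j | w j 0 != 0] by rewrite h0 inE.
    by rewrite inE negbK => /eqP ->; rewrite expr0n.
  by rewrite hw1 => /eqP; rewrite oner_eq0.
- apply/negP => /eqP hT.
  have := in_setT i0; rewrite -hT inE mxE hz normr0 eqxx //.
- move=> i j; rewrite !inE negbK => /eqP hi hj.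
  have := hSw; move/matrixP/(_ i 0); rewrite [in RHS]mxE hi mulr0 mxE => h0.
  have hnn : forall j, true -> 0 <= S i j * w j 0.
    by move=> j' _; apply: mulr_ge0 => //; rewrite mxE normr_ge0.
  have := @psumr_eq0P _ _ _ _ hnn h0 j isT.
  by move/eqP; rewrite mulf_eq0 (negbTE hj) orbF => /eqP.
Qed.
Definition Rl (R : rcfType) k (J : 'M[R]_k.+1) (O : 'M[R]_k) (c : R) a (j : 'I_k) :=
  (\sum_j' J a (lift ord0 j') * O j' j) / (c * J a 0).

Arguments Rl {R k}.

Lemma rsqnorm (R : rcfType) K (x : 'rV[R]_K) :
  (x *m x^T) 0 0 = \sum_i (x 0 i) ^+ 2.
Proof. rewrite mxE; apply: eq_bigr => i _; rewrite mxE expr2 //. Qed.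

Lemma key (R : rcfType) k (J : 'M[R]_k.+1) (O : 'M[R]_k) (c : R) a b :
  J *m J^T = 1%:M -> O *m O^T = 1%:M -> (c = 1 \/ c = -1) -> a != b ->
  J a 0 != 0 -> J b 0 != 0 ->
  4 <= \sum_j (Rl J O c a j - Rl J O c b j) ^+ 2.
Proof.
move=> hJ hO hc hab ha hb.
have hJ' : J^T *m J = 1%:M by apply: mulmx1C.
set xa := J a 0; set xb := J b 0.
pose dv : 'rV[R]_k := \row_j' (J a (lift ord0 j') / (c * xa) - J b (lift ord0 j') / (c * xb)).
have h1 : forall j, Rl J O c a j - Rl J O c b j = (dv *m O) 0 j.
  move=> j; rewrite /Rl !mulr_suml -sumrB mxE; apply: eq_bigr => j' _; rewrite !mxE.
  rewrite /xa /xb; ring.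
have h2 : \sum_j (Rl J O c a j - Rl J O c b j) ^+ 2 = \sum_j' (dv 0 j') ^+ 2.
  under eq_bigr do rewrite h1.
  by rewrite -!rsqnorm trmx_mul mulmxA -(mulmxA dv) hO mulmx1.
have hc0 : c != 0 by case: hc => ->; rewrite ?oppr_eq0 oner_eq0.
pose A := \sum_j' J a (lift ord0 j') * J a (lift ord0 j').
pose B := \sum_j' J b (lift ord0 j') * J b (lift ord0 j').
pose C := \sum_j' J a (lift ord0 j') * J b (lift ord0 j').
have h3 : \sum_j' (dv 0 j') ^+ 2 = (xb ^+ 2 * A + xa ^+ 2 * B - 2 * xa * xb * C) / (xa * xb) ^+ 2.
  rewrite /A /B /C !mulr_sumr -big_split /= -sumrB mulr_suml; apply: eq_bigr => j' _.
  rewrite mxE; case: hc => ->; field; rewrite ?ha ?hb //.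
have hJe : forall u v, \sum_i J u i * J v i = (u == v)%:R.
  move=> u v; have /matrixP/(_ u v) := hJ; rewrite [in RHS]mxE => <-; rewrite mxE.
  by apply: eq_bigr => i _; rewrite mxE.
have hA : xa * xa + A = 1 by rewrite /A -(big_ord_recl _ (fun i => J a i * J a i)) hJe eqxx.
have hB : xb * xb + B = 1 by rewrite /B -(big_ord_recl _ (fun i => J b i * J b i)) hJe eqxx.
have hC : xa * xb + C = 0 by rewrite /C -(big_ord_recl _ (fun i => J a i * J b i)) hJe (negbTE hab).
have hcol : xa ^+ 2 + xb ^+ 2 <= 1.
  have /matrixP/(_ 0 0) := hJ'; rewrite !mxE /= => e.
  rewrite mulr1n in e; rewrite -e.
  rewrite (bigD1 a) //= (bigD1 b) //=; last by rewrite eq_sym.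
  rewrite ?mxE addrA -[X in X <= _]addr0 lerD ?expr2 //.
  by apply: sumr_ge0 => i _; rewrite ?mxE -expr2 sqr_ge0.
rewrite h2 h3 ler_pdivlMr; last by rewrite lt_def sqr_ge0 andbT sqrf_eq0 mulf_neq0.
have -> : xb ^+ 2 * A + xa ^+ 2 * B - 2 * xa * xb * C = xa ^+ 2 + xb ^+ 2.
  have eA : A = 1 - xa * xa by rewrite -hA; ring.
  have eB : B = 1 - xb * xb by rewrite -hB; ring.
  have eC : C = - (xa * xb) by rewrite -[RHS]add0r -hC; ring.
  rewrite eA eB eC; ring.
have pa : 0 <= xa ^+ 2 := sqr_ge0 _.
have pb : 0 <= xb ^+ 2 := sqr_ge0 _.
rewrite exprMn.
move: pa pb hcol; move: (xa ^+ 2) (xb ^+ 2) => p q pa pb hpq.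
have h1q : 0 <= (p - q) ^+ 2 := sqr_ge0 _.
have h2' : 0 <= (p + q) * (1 - (p + q)) by apply: mulr_ge0; lra.
nra.
Qed.

Lemma fnorm_gt0 (R : rcfType) n (x : 'I_n -> R) i : x i != 0 -> 0 < fnorm x.
Proof.
move=> hx; rewrite /fnorm sqrtr_gt0 (bigD1 i) //=.
have h0 : 0 <= \sum_(j < n | j != i) x j ^+ 2 by apply: sumr_ge0 => j _; apply: sqr_ge0.
have h1 : 0 < x i ^+ 2 by rewrite lt_def sqr_ge0 sqrf_eq0 hx.
lra.
Qed.

Lemma ent (R : rcfType) K K' (d : 'rV[R]_K) (A : 'M[R]_(K, K')) (d' : 'rV[R]_K') i j :
  ((diag_mx d *m A *m diag_mx d') *m (diag_mx d *m A *m diag_mx d')^T) i j =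
  \sum_k (d 0 i * A i k * d' 0 k) * (d 0 j * A j k * d' 0 k).
Proof.
rewrite mul_diag_mx mul_mx_diag mxE; apply: eq_bigr => k _.
by rewrite !mxE.

Qed.

Lemma ent_ge0 (R : rcfType) K K' (d : 'rV[R]_K) (A : 'M[R]_(K, K')) (d' : 'rV[R]_K') i j :
  (forall a, 0 <= d 0 a) -> (forall a, 0 <= d' 0 a) -> (forall a b, 0 <= A a b) ->
  0 <= ((diag_mx d *m A *m diag_mx d') *m (diag_mx d *m A *m diag_mx d')^T) i j.
Proof.
move=> h1 h2 h3; rewrite ent; apply: sumr_ge0 => k _.
repeat apply: mulr_ge0 => //.
Qed.
(* K = k.+1 with k >= 1 (so K >= 2 and K - 1 = k); column 0 of J / U is the
   leading one, columns [lift ord0 j] (j : 'I_k) are columns 2..K. *)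
Theorem lemma4 (R : rcfType) (n m k K' Q : nat)
    (hk : (1 <= k)%N) (hK' : (0 < K')%N) (hQ : (0 < Q)%N)
    (l : 'I_n -> 'I_k.+1) (r : 'I_m -> 'I_K')
    (hl : forall a : 'I_k.+1, exists i, l i = a)
    (hr : forall b : 'I_K', exists j, r j = b)
    (theta : 'I_n -> R) (delta : 'I_m -> R)
    (htheta : forall i, 0 < theta i <= 1)
    (hdelta : forall j, 0 < delta j <= 1)
    (E : 'M[R]_k.+1) (F : 'I_Q -> 'M[R]_(k.+1, K'))
    (hEsym : E^T = E)
    (hE01 : forall a b, 0 <= E a b <= 1)
    (hF01 : forall q a b, 0 <= F q a b <= 1)
    (hEirr : irreducible_mx (E *m E^T))
    (hFirr : forall q, irreducible_mx (F q *m (F q)^T))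
    (J : 'M[R]_k.+1) (sigma : 'rV[R]_k.+1)
    (hJorth : J *m J^T = 1%:M)
    (hsigma : forall a b : 'I_k.+1, (a <= b)%N -> sigma 0 b <= sigma 0 a)
    (hdecomp : Sbar l r theta delta E F = J *m diag_mx sigma *m J^T)
    (O : 'M[R]_k) (hO : O *m O^T = 1%:M)
    (c : R) (hc : c = 1 \/ c = -1) :
  let U := ThetaM l theta *m J in
  let Utail : 'M[R]_(n, k) := \matrix_(i0, j0) U i0 (lift ord0 j0) in
  let UO := Utail *m O in
  let Rm : 'M[R]_(n, k) := \matrix_(i, j) (UO i j / (c * U i ord0)) in
  forall i1 i2 : 'I_n,
    (l i1 != l i2 -> 2 <= vnorm (row i1 Rm - row i2 Rm)) /\
    (l i1 = l i2 -> vnorm (row i1 Rm - row i2 Rm) = 0).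
Proof.
move=> U Utail UO Rm.
pose N := comm_norm l theta.
have hN : forall a, 0 < N a.
  move=> a; case: (hl a) => i hi; apply: (@fnorm_gt0 _ _ _ i).
  by rewrite hi eqxx mulr1 gt_eqF //; case/andP: (htheta i).
have hT : 0 < fnorm theta.
  case: (hl ord0) => i _; apply: (@fnorm_gt0 _ _ _ i).
  by rewrite gt_eqF //; case/andP: (htheta i).
have hD : 0 < fnorm delta.
  case: (hr (Ordinal hK')) => j _; apply: (@fnorm_gt0 _ _ _ j).
  by rewrite gt_eqF //; case/andP: (hdelta j).
pose S := Sbar l r theta delta E F.
have hSij : forall i j, S i j =
   (fnorm theta ^+ 2 / fnorm delta ^+ 2) *
     ((PsiM l theta *m E *m PsiM l theta) *m (PsiM l theta *m E *m PsiM l theta)^T) i j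
   + \sum_q ((PsiM l theta *m F q *m PsiM r delta) *m (PsiM l theta *m F q *m PsiM r delta)^T) i j.
  by move=> i j; rewrite /S /Sbar /= !mxE summxE.
have hpsi : forall a, 0 <= (\row_a (comm_norm l theta a / fnorm theta)) 0 a.
  by move=> a; rewrite mxE divr_ge0 // /comm_norm /fnorm sqrtr_ge0.
have hpsid : forall a, 0 <= (\row_a (comm_norm r delta a / fnorm delta)) 0 a.
  by move=> a; rewrite mxE divr_ge0 // /comm_norm /fnorm sqrtr_ge0.
have hE0 : forall a b, 0 <= E a b by move=> a b; case/andP: (hE01 a b).
have hF0 : forall q a b, 0 <= F q a b by move=> q a b; case/andP: (hF01 q a b).
have hal : 0 < fnorm theta ^+ 2 / fnorm delta ^+ 2 by apply: divr_gt0; apply: exprn_gt0.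
have hpos : forall i j, 0 <= S i j.
  move=> i j; rewrite hSij; apply: addr_ge0.
    by apply: mulr_ge0; [exact: ltW | exact: ent_ge0].
  by apply: sumr_ge0 => q _; exact: ent_ge0.
have hirrS : irreducible_mx S.
  move=> [T [T1 T2 T3]]; apply: hEirr; exists T; split => // i j hi hj.
  have := T3 i j hi hj; rewrite hSij => /eqP.
  rewrite paddr_eq0; last first.
  - by apply: sumr_ge0 => q _; exact: ent_ge0.
  - by apply: mulr_ge0; [exact: ltW | exact: ent_ge0].
  case/andP; rewrite mulf_eq0 (gt_eqF hal) /= /PsiM ent => /eqP h0 _.
  have hnn : forall kk, true -> 0 <= (\row_a (comm_norm l theta a / fnorm theta)) 0 i * E i kk *
      (\row_a (comm_norm l theta a / fnorm theta)) 0 kk *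
     ((\row_a (comm_norm l theta a / fnorm theta)) 0 j * E j kk *
      (\row_a (comm_norm l theta a / fnorm theta)) 0 kk).
    by move=> kk _; repeat apply: mulr_ge0 => //.
  rewrite mxE; apply: big1 => kk _; rewrite mxE.
  have := @psumr_eq0P _ _ _ _ hnn h0 kk isT.
  rewrite !mxE.
  have hp : forall a, 0 < comm_norm l theta a / fnorm theta by move=> a; apply: divr_gt0.
  set pi := comm_norm l theta i / fnorm theta.
  set pj := comm_norm l theta j / fnorm theta.
  set pk := comm_norm l theta kk / fnorm theta.
  have -> : pi * E i kk * pk * (pj * E j kk * pk) = (pi * pj * pk * pk) * (E i kk * E j kk) by ring.
  move/eqP; rewrite mulf_eq0 => /orP [|/eqP //].
  have hp' : forall a, comm_norm l theta a / fnorm theta != 0 by move=> a; exact: negbT (gt_eqF (hp a)).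
  have hne : pi * pj * pk * pk != 0 by do 3 (apply: mulf_neq0; last by apply: hp'); apply: hp'.
  by rewrite (negbTE hne).
have hs0 : forall a, sigma 0 a <= sigma 0 0 by move=> a; apply: hsigma; apply: leq0n.
have hJnz := @PF _ _ S J sigma hJorth hs0 hdecomp hpos hirrS.
have hU : forall i a, U i a = theta i / N (l i) * J (l i) a.
  move=> i a; rewrite /U mxE (bigD1 (l i)) //= big1 ?addr0.
    by rewrite /ThetaM mxE eqxx mulr1.
  by move=> b hb; rewrite /ThetaM mxE eq_sym (negbTE hb) /= mulr0 !mul0r.
have hR : forall i j, Rm i j = Rl J O c (l i) j.
  move=> i j; rewrite /Rm mxE /UO mxE /Rl.
  have g0 : theta i / N (l i) != 0.
    by rewrite gt_eqF // divr_gt0 //; case/andP: (htheta i).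
  rewrite (eq_bigr (fun j' => theta i / N (l i) * (J (l i) (lift ord0 j') * O j' j))); last first.
    by move=> j' _; rewrite /Utail mxE hU mulrA.
  by rewrite -mulr_sumr hU [c * _]mulrCA invfM mulrACA mulfV // mul1r.
have hv : forall i1 i2, vnorm (row i1 Rm - row i2 Rm) =
    Num.sqrt (\sum_j (Rl J O c (l i1) j - Rl J O c (l i2) j) ^+ 2).
  move=> j1 j2; rewrite /vnorm; congr Num.sqrt; apply: eq_bigr => j _.
  by rewrite mxE mxE hR mxE mxE hR.
move=> i1 i2; split.
- move=> hne; rewrite hv.
  have h4 := @key _ _ J O c (l i1) (l i2) hJorth hO hc hne (hJnz _) (hJnz _).
  have h42 : (4 : R) = 2 ^+ 2 by rewrite expr2 -natrM.
  have -> : (2 : R) = Num.sqrt 4 by rewrite h42 sqrtr_sqr ger0_norm.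
  rewrite ler_sqrt //; lra.
- move=> heq; rewrite hv heq big1 ?sqrtr0 // => j _.
  by rewrite subrr expr0n.
Qed.
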